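(* There exist no positive integers $a,b,c$ with $1\le a\le b$ and $c\ge 6$ such that every nonnegative integer can be written as $ax^2+by^2+c(z^2+zw+w^2)$ with $x,y,z,w\in\mathbb{Z}$. *)

(* Defs.v *)
From Stdlib Require Import ZArith.
Open Scope Z_scope.

Definition represents (a b c n : Z) : Prop :=
  exists x y z w : Z, n = a * x ^ 2 + b * y ^ 2 + c * (z ^ 2 + z * w + w ^ 2).

(* Main.v *)
Require Import Defs.
From Stdlib Require Import ZArith Lia.
Open Scope Z_scope.

Lemma sq_small x : x ^ 2 <= 5 -> x = -2 \/ x = -1 \/ x = 0 \/ x = 1 \/ x = 2.
Proof.
  intro H.
  assert (-2 <= x <= 2) by nia.
  lia.
Qed.

Lemma red a b c n : 1 <= a -> 1 <= b -> 6 <= c -> 0 <= n <= 5 ->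
  represents a b c n -> exists x y, n = a * x ^ 2 + b * y ^ 2.
Proof.
  intros Ha Hb Hc Hn [x [y [z [w E]]]].
  assert (HQ : 0 <= z ^ 2 + z * w + w ^ 2) by nia.
  assert (Hx : 0 <= a * x ^ 2) by nia.
  assert (Hy : 0 <= b * y ^ 2) by nia.
  assert (z ^ 2 + z * w + w ^ 2 = 0) by nia.
  exists x, y. nia.
Qed.

Theorem theorem7p2 :
  ~ exists a b c : Z,
      1 <= a /\ a <= b /\ 6 <= c /\
      forall n : Z, 0 <= n -> represents a b c n.
Proof.
  intros [a [b [c [Ha [Hab [Hc H]]]]]].
  assert (Hb : 1 <= b) by lia.
  destruct (red a b c 1 Ha Hb Hc ltac:(lia) (H 1 ltac:(lia))) as [x1 [y1 E1]].
  assert (a = 1).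
  { destruct (Z.eq_dec x1 0) as [->|Hx1].
    - assert (y1 ^ 2 >= 1) by nia. nia.
    - assert (x1 ^ 2 >= 1) by nia. nia. }
  subst a.
  destruct (red 1 b c 2 Ha Hb Hc ltac:(lia) (H 2 ltac:(lia))) as [x2 [y2 E2]].
  assert (b = 1 \/ b = 2).
  { destruct (Z.eq_dec y2 0) as [->|Hy2].
    - assert (x2 ^ 2 <= 5) by nia.
      destruct (sq_small x2) as [|[|[|[|]]]]; subst; lia.
    - assert (y2 ^ 2 >= 1) by nia.
      assert (0 <= x2 ^ 2) by nia. nia. }
  destruct H0; subst b.
  - destruct (red 1 1 c 3 Ha Hb Hc ltac:(lia) (H 3 ltac:(lia))) as [x [y E]].
    assert (x ^ 2 <= 5) by nia. assert (y ^ 2 <= 5) by nia.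
    destruct (sq_small x) as [|[|[|[|]]]]; destruct (sq_small y) as [|[|[|[|]]]];
      subst; lia.
  - destruct (red 1 2 c 5 Ha Hb Hc ltac:(lia) (H 5 ltac:(lia))) as [x [y E]].
    assert (x ^ 2 <= 5) by nia. assert (y ^ 2 <= 5) by nia.
    destruct (sq_small x) as [|[|[|[|]]]]; destruct (sq_small y) as [|[|[|[|]]]];
      subst; lia.
Qed.
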